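(* Let $n\ge16$ be such that $K=n/\log_2n$ is an integer, let $0\le c<1$, $0<\delta\le q$ with $K(1-c)\ge16\ln n$, and let $\mathbf A(\lambda)=\begin{bmatrix}0&1-\delta\lambda\\-c&1+c-q\lambda\end{bmatrix}$. If $\lambda\ge\frac{4(1-c)\ln n}{(q-c\delta)K}$, $\delta\lambda\le1$ and $q\lambda\le1+c$, then $$\|\mathbf A^K(\lambda)\|\le\frac{\sqrt6}{n^2\log_2n}\le1.$$
   Context: $\|\cdot\|$ denotes the spectral norm. *)

(* Defs.v *)
From HB Require Import structures.
From mathcomp Require Import all_boot all_order all_algebra.
From mathcomp Require Import all_classical all_reals all_analysis.
Set Implicit Arguments. Unset Strict Implicit. Unset Printing Implicit Defensive.
Import Order.TTheory GRing.Theory Num.Theory.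
Local Open Scope ring_scope.
Local Open Scope classical_set_scope.

Definition vnorm2 {R : realType} {n : nat} (v : 'cV[R]_n) : R :=
  Num.sqrt (\sum_(i < n) v i 0 ^+ 2).

Definition specnorm {R : realType} {m n : nat} (A : 'M[R]_(m, n)) : R :=
  sup [set vnorm2 (A *m x) | x in [set x : 'cV[R]_n | vnorm2 x <= 1]].

Definition log2 {R : realType} (x : R) : R := ln x / ln 2.

Definition Amat {R : realType} (c delta q lam : R) : 'M[R]_2 :=
  \matrix_(i < 2, j < 2)
    if i == 0 then (if j == 0 then 0 else 1 - delta * lam)
    else (if j == 0 then - c else 1 + c - q * lam).

(* Main.v *)
Require Import Defs.
From HB Require Import structures.
From mathcomp Require Import all_boot all_order all_algebra.
From mathcomp Require Import all_classical all_reals all_analysis.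
From mathcomp Require Import ring lra.
Import Order.TTheory GRing.Theory Num.Theory.
Local Open Scope ring_scope.

Section S.
Variable R : realType.
Lemma lt_sq (x y : R) : 0 <= x -> x < y -> x ^+ 2 < y ^+ 2.
Proof. move=> x0 xy; nra. Qed.

Variables b e : R.

Fixpoint sq (k : nat) : R :=
  match k with
  | 0 => 0
  | 1 => 1
  | S ((S k'') as k') => b * sq k' - e * sq k''
  end.

Lemma sq0 : sq 0 = 0. Proof. by []. Qed.
Lemma sq1 : sq 1 = 1. Proof. by []. Qed.
Lemma sqS k : sq k.+2 = b * sq k.+1 - e * sq k.
Proof. by []. Qed.

Lemma sq_real (r1 r2 rho : R) : r1 + r2 = b -> r1 * r2 = e ->
  0 <= r2 -> r2 <= r1 -> r1 <= rho ->
  forall k, 0 <= sq k.+1 <= k.+1%:R * rho ^+ k.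
Proof.
move=> hs hp h2 h21 h1.
have key : forall k, sq k.+1 - r1 * sq k = r2 ^+ k.
  elim=> [|k IH]; first by rewrite /= mulr0 subr0 expr0.
  rewrite sqS exprS -IH -hs -hp; ring.
have r10 : 0 <= r1 by apply: le_trans h21.
have rho0 : 0 <= rho by apply: le_trans h1.
elim=> [|k IH]; first by rewrite /= expr0 mulr1 ler01 lexx.
case/andP: IH => IH1 IH2.
have E : sq k.+2 = r1 * sq k.+1 + r2 ^+ k.+1 by rewrite -key; ring.
rewrite E; apply/andP; split.
  by apply: addr_ge0; [apply: mulr_ge0 | apply: exprn_ge0].
have h3 : r2 ^+ k.+1 <= rho ^+ k.+1.
  by apply: lerXn2r; rewrite ?nnegrE //; apply: le_trans h1.
have h4 : r1 * sq k.+1 <= rho * (k.+1%:R * rho ^+ k).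
  by apply: ler_pM.
have Heq : (k.+2)%:R = (k.+1)%:R + 1 :> R by rewrite natr1.
apply: (le_trans (lerD h4 h3)); rewrite Heq !exprS; set N := k.+1%:R; set P := rho ^+ k; rewrite le_eqVlt; apply/orP; left; apply/eqP; ring.
Qed.

Lemma sq_inv k : sq k.+1 ^+ 2 - b * sq k.+1 * sq k + e * sq k ^+ 2 = e ^+ k.
Proof.
elim: k => [|k IH]; first by rewrite /= expr0; ring.
rewrite sqS [e ^+ k.+1]exprS -IH; ring.
Qed.

Lemma sq_cplx (g : R) : 0 <= b -> 0 <= g -> g ^+ 2 = e -> b <= 2 * g ->
  forall k, `|sq k.+1| <= k.+1%:R * g ^+ k.
Proof.
move=> b0 g0 hg hb.
elim=> [|k IH]; first by rewrite /= expr0 mulr1 normr1.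
have inv := sq_inv k.+1.
set t := sq k.+2 in inv *; set u := sq k.+1 in inv IH *.
set G := g ^+ k.+1.
have G0 : 0 <= G by apply: exprn_ge0.
have hG : e ^+ k.+1 = G ^+ 2 by rewrite /G -exprM mulnC exprM hg.
rewrite hG -hg in inv.
have T2 : `|t| ^+ 2 = t ^+ 2 by rewrite real_normK // num_real.
have U2 : `|u| ^+ 2 = u ^+ 2 by rewrite real_normK // num_real.
have TU : t * u <= `|t| * `|u| by rewrite -normrM ler_norm.
have bTU : b * (t * u) <= 2 * g * (`|t| * `|u|).
  apply: le_trans (_ : b * (`|t| * `|u|) <= _); first by apply: ler_wpM2l.
  by apply: ler_wpM2r => //; apply: mulr_ge0.
have step : `|t| <= g * `|u| + G.
  rewrite leNgt; apply/negP => H.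
  have H1 : G < `|t| - g * `|u| by lra.
  have H2 : G ^+ 2 < (`|t| - g * `|u|) ^+ 2.
    by apply: lt_sq.
  have : (`|t| - g * `|u|) ^+ 2 <= t ^+ 2 - b * t * u + g ^+ 2 * u ^+ 2.
    rewrite -T2 -U2; nra.
  by rewrite inv => /(lt_le_trans H2); rewrite ltxx.
apply: (le_trans step).
have Heq : (k.+2)%:R = (k.+1)%:R + 1 :> R by rewrite natr1.
have : g * `|u| <= g * (k.+1%:R * g ^+ k) by apply: ler_wpM2l.
move=> H; apply: (le_trans (lerD H (lexx G))).
rewrite Heq /G !exprS; rewrite le_eqVlt; apply/orP; left; apply/eqP; ring.
Qed.

Lemma sq_bound (rho : R) : 0 <= b -> 0 <= e -> 0 <= rho -> e <= rho ^+ 2 ->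
  b <= 2 * rho -> 0 <= rho ^+ 2 - b * rho + e ->
  forall k, `|sq k.+1| <= k.+1%:R * rho ^+ k.
Proof.
move=> b0 e0 rho0 erho brho prho k.
case: (lerP (4 * e) (b ^+ 2)) => hd.
  set r := Num.sqrt (b ^+ 2 - 4 * e).
  have r0 : 0 <= r by apply: sqrtr_ge0.
  have r2 : r ^+ 2 = b ^+ 2 - 4 * e by rewrite sqr_sqrtr // subr_ge0.
  have rb : r <= b.
    rewrite leNgt; apply/negP => H.
    have : b ^+ 2 < r ^+ 2 by apply: lt_sq.
    rewrite r2; lra.
  have rr : r <= 2 * rho - b.
    rewrite leNgt; apply/negP => H.
    have : (2 * rho - b) ^+ 2 < r ^+ 2.
      apply: lt_sq => //; lra.
    rewrite r2; nra.
  have E1 : (b + r) / 2 + (b - r) / 2 = b by field.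
  have E2 : (b + r) / 2 * ((b - r) / 2) = e.
    have -> : (b + r) / 2 * ((b - r) / 2) = (b ^+ 2 - r ^+ 2) / 4 by field.
    by rewrite r2; field.
  have E3 : 0 <= (b - r) / 2 by lra.
  have E4 : (b - r) / 2 <= (b + r) / 2 by lra.
  have E5 : (b + r) / 2 <= rho by lra.
  case/andP: (@sq_real _ _ _ E1 E2 E3 E4 E5 k) => H1 H2.
  by rewrite ger0_norm.
have g0 : 0 <= Num.sqrt e by apply: sqrtr_ge0.
have hg : Num.sqrt e ^+ 2 = e by rewrite sqr_sqrtr.
have grho : Num.sqrt e <= rho.
  rewrite leNgt; apply/negP => H.
  have : rho ^+ 2 < Num.sqrt e ^+ 2 by apply: lt_sq.
  rewrite hg; lra.
have bg : b <= 2 * Num.sqrt e.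
  rewrite leNgt; apply/negP => H.
  have : (2 * Num.sqrt e) ^+ 2 < b ^+ 2.
    apply: lt_sq => //; lra.
  rewrite exprMn hg; lra.
have HH := @sq_cplx _ b0 g0 hg bg k. apply: (le_trans HH).
apply: ler_wpM2l => //; apply: lerXn2r; rewrite ?nnegrE //.
Qed.
End S.
Arguments sq {R} b e k.
Arguments sq : simpl never.
Lemma ord2P (i : 'I_2) : i = 0 \/ i = 1.
Proof. case: i => [[|[|m]]] Hi; [left|right|by []]; exact: val_inj. Qed.

Lemma sum2 (R : realType) (F : 'I_2 -> R) : \sum_(i < 2) F i = F 0 + F 1.
Proof.
rewrite !big_ord_recl big_ord0 addr0; congr (F _ + F _); exact: val_inj.
Qed.

Lemma specnorm2 (R : realType) (M : 'M[R]_2) (B : R) : 0 <= B ->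
  M 0 0 ^+ 2 + M 0 1 ^+ 2 + M 1 0 ^+ 2 + M 1 1 ^+ 2 <= B ^+ 2 ->
  specnorm M <= B.
Proof.
move=> B0 HF; rewrite /specnorm; apply: ge_sup.
  exists (vnorm2 (M *m 0)); exists 0 => //.
  rewrite /= /vnorm2 big1 ?sqrtr0 ?ler01 // => i _; by rewrite mxE expr0n.
move=> _ [x hx <-]; rewrite /vnorm2.
move: hx; rewrite /vnorm2 /= => hx.
have hx' : (\sum_(i < 2) x i 0 ^+ 2) <= 1.
  have s0 : 0 <= \sum_(i < 2) x i 0 ^+ 2 by apply: sumr_ge0 => i _; apply: sqr_ge0.
  rewrite -(sqr_sqrtr s0); have := sqrtr_ge0 (\sum_(i < 2) x i 0 ^+ 2); nra.
rewrite sum2 in hx'.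
rewrite sum2 !mxE !sum2.
rewrite -[X in _ <= X](ger0_norm B0) -sqrtr_sqr ler_sqrt ?sqr_ge0 //.
set a := M 0 0 in HF *; set b' := M 0 1 in HF *; set c := M 1 0 in HF *; set d := M 1 1 in HF *.
set y0 := x 0 0 in hx' *; set y1 := x 1 0 in hx' *.
have H1 : (a * y0 + b' * y1) ^+ 2 <= (a ^+ 2 + b' ^+ 2) * (y0 ^+ 2 + y1 ^+ 2).
  have := sqr_ge0 (a * y1 - b' * y0); nra.
have H2 : (c * y0 + d * y1) ^+ 2 <= (c ^+ 2 + d ^+ 2) * (y0 ^+ 2 + y1 ^+ 2).
  have := sqr_ge0 (c * y1 - d * y0); nra.
have ha := sqr_ge0 a; have hb := sqr_ge0 b'; have hc := sqr_ge0 c; have hd := sqr_ge0 d.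
have hy0 := sqr_ge0 y0; have hy1 := sqr_ge0 y1.
nra.
Qed.

Lemma powA (R : realType) (c delta q lam : R) k (i j : 'I_2) :
  (Amat c delta q lam ^+ k.+1) i j =
  if i == 0 then (if j == 0 then - ((1 - delta * lam) * c) * sq (1 + c - q * lam) ((1 - delta * lam) * c) k else (1 - delta * lam) * sq (1 + c - q * lam) ((1 - delta * lam) * c) k.+1)
  else (if j == 0 then - c * sq (1 + c - q * lam) ((1 - delta * lam) * c) k.+1 else sq (1 + c - q * lam) ((1 - delta * lam) * c) k.+2).
Proof.
set a := 1 - delta * lam; set b := 1 + c - q * lam; set e := a * c.
elim: k i j => [|k IH] i j.
  rewrite expr1 /Amat mxE /=.
  by case: (ord2P i) => ->; case: (ord2P j) => -> /=; rewrite ?sqS ?sq0 ?sq1 /a /b /e; ring.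
have -> : Amat c delta q lam ^+ k.+2 = Amat c delta q lam ^+ k.+1 * Amat c delta q lam by apply: exprSr.
rewrite -mulmxE mxE sum2 !IH.
rewrite /Amat !mxE /=.
case: (ord2P i) => ->; case: (ord2P j) => -> /=; rewrite ?sqS /e /a /b; ring.
Qed.

Lemma ln_le_sub1 (R : realType) (x : R) : 0 < x -> ln x <= x - 1.
Proof.
move=> x0; have := expR_ge1Dx (ln x); rewrite lnK ?posrE //; lra.
Qed.

Lemma ln2_ge (R : realType) : 1 / 2 <= ln (2 : R).
Proof.
have h : ln ((2 : R)^-1) <= 2^-1 - 1 by apply: ln_le_sub1.
rewrite lnV ?posrE // in h; lra.
Qed.

Lemma rK_lem (R : realType) (rho N l : R) (K : nat) : 0 < rho -> 0 < N ->
  l * K%:R = ln N -> rho = 1 - 3 * l -> rho ^+ K * N ^+ 3 <= 1.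
Proof.
move=> rpos N0 hl hr.
have : ln (rho ^+ K * N ^+ 3) <= ln 1.
  rewrite lnM ?posrE ?exprn_gt0 // !lnXn // ln1 -[ln rho *+ K]mulr_natr -[ln N *+ 3]mulr_natr -hl.
  have := @ln_le_sub1 _ _ rpos; rewrite {2}hr => h.
  have : ln rho * K%:R <= (- 3 * l) * K%:R by rewrite ler_wpM2r //; lra.
  lra.
by rewrite ler_ln ?posrE ?exprn_gt0 // ?ltr01 ?mulr_gt0 ?exprn_gt0.
Qed.

Lemma sq_abs (R : realType) (x y : R) : `|x| <= y -> x ^+ 2 <= y ^+ 2.
Proof.
move=> h; have h0 : 0 <= `|x| by apply: normr_ge0.
rewrite -real_normK ?num_real //; nra.
Qed.

Lemma final_bound (R : realType) (m : nat) (rho a c e s1 s2 s3 N : R) :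
  13 / 16 <= rho -> rho <= 1 -> 0 <= a -> a <= 1 -> 0 <= c -> c <= 1 ->
  0 <= e -> e <= rho ^+ 2 -> (8 : R) <= m.+2%:R -> 0 < N ->
  `|s1| <= m.+1%:R * rho ^+ m -> `|s2| <= m.+2%:R * rho ^+ m.+1 ->
  `|s3| <= m.+3%:R * rho ^+ m.+2 -> rho ^+ m.+2 * N ^+ 3 <= 1 ->
  (- e * s1) ^+ 2 + (a * s2) ^+ 2 + (- c * s2) ^+ 2 + s3 ^+ 2 <=
  (Num.sqrt 6 * m.+2%:R * (N ^+ 3)^-1) ^+ 2.
Proof.
move=> r0 r1 a0 a1 c0 c1 e0 er K8 N0 h1 h2 h3 hK.
set Kr : R := m.+2%:R in K8 h2 *.
set Z := (N ^+ 3)^-1.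
have Z0 : 0 < Z by rewrite invr_gt0 exprn_gt0.
have NZ : N ^+ 3 * Z = 1 by rewrite /Z divff //; apply/eqP; have := exprn_gt0 3 N0; lra.
set P := rho ^+ m.+1 in h2 *.
have E2 : rho ^+ m.+2 = rho * P by rewrite /P exprS.
have E0 : rho * rho ^+ m = P by rewrite /P exprS.
have P0 : 0 <= P by apply: exprn_ge0; lra.
have Km1 : m.+1%:R = Kr - 1 by rewrite /Kr -natr1; ring.
have Kp1 : m.+3%:R = Kr + 1 by rewrite /Kr -[m.+3]addn1 natrD.
have u : rho * P <= Z.
  have : rho * P * N ^+ 3 * Z <= 1 * Z by rewrite -E2 ler_wpM2r //; lra.
  by rewrite -mulrA NZ mulr1 mul1r.
have v : P <= 16 / 13 * Z by nra.
have b1 : `|- e * s1| <= (Kr - 1) * (rho * P).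
  rewrite normrM normrN (ger0_norm e0).
  have : e * `|s1| <= rho ^+ 2 * `|s1| by apply: ler_wpM2r.
  have : rho ^+ 2 * `|s1| <= rho ^+ 2 * (m.+1%:R * rho ^+ m) by apply: ler_wpM2l => //; apply: sqr_ge0.
  rewrite Km1 -E0 => H H'; apply: (le_trans H'); apply: (le_trans H).
  by rewrite le_eqVlt; apply/orP; left; apply/eqP; ring.
have b2 : `|a * s2| <= Kr * P.
  rewrite normrM (ger0_norm a0); have := normr_ge0 s2; nra.
have b3 : `|- c * s2| <= Kr * P.
  rewrite normrM normrN (ger0_norm c0); have := normr_ge0 s2; nra.
have b4 : `|s3| <= (Kr + 1) * (rho * P) by rewrite -Kp1 -E2.
have q1 := sq_abs _ _ _ b1; have q2 := sq_abs _ _ _ b2; have q3 := sq_abs _ _ _ b3; have q4 := sq_abs _ _ _ b4.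
have rP0 : 0 <= rho * P by apply: mulr_ge0 => //; lra.
have hu : (rho * P) ^+ 2 <= Z ^+ 2 by apply: (sq_abs _ _ _); rewrite ger0_norm.
have hv : P ^+ 2 <= (16 / 13 * Z) ^+ 2 by apply: (sq_abs _ _ _); rewrite ger0_norm.
have s6 : Num.sqrt 6 ^+ 2 = 6 :> R by rewrite sqr_sqrtr.
rewrite !exprMn s6.
have w1 : (Kr - 1) ^+ 2 * (rho * P) ^+ 2 + (Kr + 1) ^+ 2 * (rho * P) ^+ 2 <= (2 * Kr ^+ 2 + 2) * Z ^+ 2.
  have -> : (Kr - 1) ^+ 2 * (rho * P) ^+ 2 + (Kr + 1) ^+ 2 * (rho * P) ^+ 2 = (2 * Kr ^+ 2 + 2) * (rho * P) ^+ 2 by ring.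
  by apply: ler_wpM2l => //; nra.
have w2 : 2 * (Kr ^+ 2 * P ^+ 2) <= 2 * (Kr ^+ 2 * (16 / 13 * Z) ^+ 2).
  by apply: ler_wpM2l => //; apply: ler_wpM2l => //; apply: sqr_ge0.
have w3 : 0 <= (Kr ^+ 2 * (6 - 2 - 2 * (256 / 169)) - 2) * Z ^+ 2.
  by apply: mulr_ge0; [nra | apply: sqr_ge0].
rewrite !exprMn in q1 q2 q3 q4 w2.
nra.
Qed.

Theorem mainTheorem13 (R : realType) (n K : nat) (c delta q lam : R)
  (hn : (16 <= n)%N)
  (hK : K%:R = n%:R / log2 (n%:R : R))
  (hc0 : 0 <= c) (hc1 : c < 1)
  (hd0 : 0 < delta) (hdq : delta <= q)
  (hKc : K%:R * (1 - c) >= 16 * ln (n%:R : R))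
  (hlam : lam >= 4 * (1 - c) * ln (n%:R : R) / ((q - c * delta) * K%:R))
  (hdl : delta * lam <= 1)
  (hql : q * lam <= 1 + c) :
  specnorm (Amat c delta q lam ^+ K) <=
    Num.sqrt 6 / (n%:R ^+ 2 * log2 (n%:R : R))
  /\ Num.sqrt 6 / (n%:R ^+ 2 * log2 (n%:R : R)) <= 1.
Proof.
set N : R := n%:R in hK hKc hlam *.
set Kr : R := K%:R in hK hKc hlam *.
have N16 : 16 <= N by rewrite /N (ler_nat R 16 n).
have N0 : 0 < N by lra.
have ln2 := ln2_ge R.
have lnN2 : ln 2 <= ln N by rewrite ler_ln ?posrE //; lra.
have lnN0 : 0 < ln N by lra.
have L1 : 1 <= log2 N by rewrite /log2 ler_pdivlMr; lra.
have Kr0 : 0 < Kr by rewrite hK divr_gt0 //; lra.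
have hL : log2 N = N / Kr.
  by rewrite hK invf_div mulrC divfK //; apply/eqP; lra. 
have Kr8 : 8 <= Kr by nra.
rewrite hL.
split; last first.
  have KN : Kr <= N.
    by move: L1; rewrite hL ler_pdivlMr // mul1r.
  have s6 : Num.sqrt 6 <= 3 :> R.
    have h1 := sqrtr_ge0 (6 : R); have h2 : Num.sqrt (6 : R) ^+ 2 = 6 by rewrite sqr_sqrtr.
    nra.
  have s60 := sqrtr_ge0 (6 : R).
  rewrite ler_pdivrMr; last by apply: mulr_gt0; [apply: exprn_gt0 | apply: divr_gt0].
  rewrite mul1r.
  have NK1 : 1 <= N / Kr by rewrite ler_pdivlMr // mul1r.
  have : 256 <= N ^+ 2 by nra.
  nra.
set l := ln N / Kr.
have hlK : l * Kr = ln N by rewrite /l divfK //; apply/eqP; lra.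
have l0 : 0 < l by rewrite /l divr_gt0.
have l16 : 16 * l <= 1 - c.
  by rewrite /l mulrA ler_pdivrMr // [_ * Kr]mulrC.
have qcd : 0 < q - c * delta by nra.
have hP : 4 * (1 - c) * l <= lam * (q - c * delta).
  move: hlam; rewrite /l ler_pdivrMr ?mulr_gt0 // -/l -hlK => H; rewrite -(ler_pM2r Kr0); lra.
have lam0 : 0 < lam.
  have : 0 < lam * (q - c * delta) by nra.
  by rewrite pmulr_lgt0.
set rho := 1 - 3 * l.
set a := 1 - delta * lam; set b := 1 + c - q * lam; set e := a * c.
have a0 : 0 <= a by rewrite /a; lra.
have a1 : a <= 1 by rewrite /a; nra.
have b0 : 0 <= b by rewrite /b; lra.
have e0 : 0 <= e by rewrite /e mulr_ge0.
have ec : e <= c by rewrite /e; nra.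
have rho0 : 13 / 16 <= rho by rewrite /rho; lra.
have rho1 : rho <= 1 by rewrite /rho; lra.
have erho : e <= rho ^+ 2 by rewrite /rho; nra.
have brho : b <= 2 * rho by rewrite /b /rho; nra.
have prho : 0 <= rho ^+ 2 - b * rho + e.
  have -> : rho ^+ 2 - b * rho + e = lam * (q - c * delta) - 3 * l * (1 - c + q * lam) + 9 * l ^+ 2.
    by rewrite /rho /b /e /a; ring.
  set P := lam * (q - c * delta) in hP *.
  have Q : q * lam * (1 - c) <= P.
    have : 0 <= lam * c * (q - delta) by apply: mulr_ge0; [apply: mulr_ge0|]; lra.
    rewrite /P; nra.
  clearbody P.
  have h1 : 4 * (1 - c) * l * (1 - c - 3 * l) <= P * (1 - c - 3 * l).
    by apply: ler_wpM2r => //; lra.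
  have h2 : 3 * l * (q * lam * (1 - c)) <= 3 * l * P.
    by apply: ler_wpM2l => //; lra.
  have h3 : 0 <= (1 - c) * l * (1 - c - 12 * l).
    by apply: mulr_ge0; [apply: mulr_ge0|]; lra.
  have h4 : 0 <= l ^+ 2 * (1 - c) by apply: mulr_ge0; [apply: sqr_ge0 | lra].
  have : 0 <= (1 - c) * (P - 3 * l * (1 - c + q * lam) + 9 * l ^+ 2) by lra.
  by rewrite pmulr_rge0 //; lra.
have rpos : 0 < rho by lra.
have Sb := @sq_bound R b e rho b0 e0 (ltW rpos) erho brho prho.
have K2 : (2 <= K)%N by rewrite -(ler_nat R) -/Kr; lra.
have [m hm] : exists m, K = m.+2 by exists (K - 2)%N; rewrite -addn2 subnK.
have rK : rho ^+ K * N ^+ 3 <= 1 by apply: (@rK_lem R rho N l K).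
set Z := (N ^+ 3)^-1.
have hB : Num.sqrt 6 / (N ^+ 2 * (N / Kr)) = Num.sqrt 6 * Kr * Z.
  by rewrite /Z; field; apply/andP; split; apply/eqP; lra.
rewrite hB.
have K8' : (8 : R) <= m.+2%:R by rewrite -hm.
apply: specnorm2.
  apply: mulr_ge0; last by rewrite invr_ge0 exprn_ge0 //; lra.
  by apply: mulr_ge0; [apply: sqrtr_ge0 | lra].
rewrite hm !powA /= -/a -/b -/e /Kr hm.
rewrite hm in rK.
apply: (@final_bound R m rho a c e) => //; try lra.
all: exact: Sb.
Qed.
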